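(* For every $l\ge\max(|\vec n_1|,|\vec n_2|)$ and all $a'=1,\dots,p_1$, $b'=1,\dots,p_2$, $$(x-y)K^{[l]}_{b',a'}(x,y)=\sum_{b=1}^{p_2}\bar A^{(l)}_{+b,b'}(x)A^{(l-1)}_{-b,a'}(y)-\sum_{a=1}^{p_1}\bar A^{(l-1)}_{-a,b'}(x)A^{(l)}_{+a,a'}(y),$$ $$(x-y)K^{[l]}(x,y)=\sum_{b=1}^{p_2}\bar Q^{(l)}_{+b}(x)Q^{(l-1)}_{-b}(y)-\sum_{a=1}^{p_1}\bar Q^{(l-1)}_{-a}(x)Q^{(l)}_{+a}(y).$$
   Context: Setting: $\mu$ finite Borel measure on an interval, weights $w_{1,a}$ ($a\le p_1$), $w_{2,b}$ ($b\le p_2$), compositions $\vec n_\ell=(n_{\ell,1},\dots,n_{\ell,p_\ell})\in\mathbb N^{p_\ell}$, $|\vec n_\ell|=\sum_an_{\ell,a}$. Each $i\in\mathbb Z_+$ is uniquely $i=q|\vec n_\ell|+n_{\ell,1}+\dots+n_{\ell,a-1}+r$ ($0\le r<n_{\ell,a}$); $a_\ell(i)=a$, $k_\ell(i)=qn_{\ell,a}+r$. $\chi_{\ell,a}(x)$: semi-infinite vector with $i$-th entry $x^{k_\ell(i)}$ if $a_\ell(i)=a$, else $0$; superscript $(i)$ = $i$-th entry, $[l]$ = first $l$ entries. Moment matrix $g_{i,j}=\int x^{k_1(i)+k_2(j)}w_{1,a_1(i)}w_{2,a_2(j)}d\mu$, $g^{[l]}=(g_{i,j})_{0\le i,j<l}$,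 with all $\det g^{[l]}\ne0$ and Gauss–Borel factorization $g=S^{-1}\bar S$ ($S$ unit lower triangular, $\bar S$ upper triangular invertible). $A^{(k)}_a$ = $k$-th entry of $S\chi_{1,a}$, $\bar A^{(k)}_b$ = $k$-th entry of $(\bar S^{-1})^\top\chi_{2,b}$, $Q^{(k)}=\sum_aA^{(k)}_aw_{1,a}$, $\bar Q^{(k)}=\sum_b\bar A^{(k)}_bw_{2,b}$. Kernels: $K^{[l]}_{b',a'}(x,y)=\sum_{k=0}^{l-1}\bar A^{(k)}_{b'}(x)A^{(k)}_{a'}(y)$, $K^{[l]}(x,y)=\sum_{k=0}^{l-1}Q^{(k)}(y)\bar Q^{(k)}(x)$. For an integer $m$ and $a\in\{1,\dots,p_1\}$: $m_{+a}$ is the smallest integer $\ge m$ with $a_1(m_{+a})=a$, and $m_{-a}$ the largest integer $\le m$ with $a_1(m_{-a})=a$; $\bar m_{\pm b}$ are defined likewise using $a_2$ and $b\in\{1,\dots,p_2\}$. $e_j$ denotes the $j$-th canonical basis vector (of the appropriate finite length). Associated polynomials: $A^{(l)}_{+a,a'}(y)=\chi_{1,a'}^{(l_{+a})}(y)-(g_{l_{+a},0},\dots,g_{l_{+a},l-1})(g^{[l]})^{-1}\chi_{1,a'}^{[l]}(y)$; $\bar A^{(m)}_{-a,b'}(x)=(\chi_{2,b'}^{[m+1]}(x))^\top(g^{[m+1]})^{-1}e_{m_{-a}}$; $A^{(m)}_{-b,a'}(y)=e_{\bar m_{-b}}^\top(g^{[m+1]})^{-1}\chi_{1,a'}^{[m+1]}(y)$;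 $\bar A^{(l)}_{+b,b'}(x)=\chi_{2,b'}^{(\bar l_{+b})}(x)-(\chi_{2,b'}^{[l]}(x))^\top(g^{[l]})^{-1}(g_{0,\bar l_{+b}},\dots,g_{l-1,\bar l_{+b}})^\top$. Associated linear forms: $Q^{(m)}_{\pm a}=\sum_{a'}A^{(m)}_{+a,a'}w_{1,a'}$ (for $+$), $\bar Q^{(m)}_{-a}=\sum_{b'}\bar A^{(m)}_{-a,b'}w_{2,b'}$, $Q^{(m)}_{-b}=\sum_{a'}A^{(m)}_{-b,a'}w_{1,a'}$, $\bar Q^{(m)}_{+b}=\sum_{b'}\bar A^{(m)}_{+b,b'}w_{2,b'}$. *)

(* Defs.v *)
From HB Require Import structures.
From mathcomp Require Import all_boot all_order all_algebra.
From mathcomp Require Import all_classical all_reals all_analysis.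
Set Implicit Arguments. Unset Strict Implicit. Unset Printing Implicit Defensive.
Import Order.TTheory GRing.Theory Num.Theory.
Import numFieldNormedType.Exports.
Local Open Scope classical_set_scope.
Local Open Scope ring_scope.

(* ---------- index bookkeeping for a composition n = (n_0,...,n_{p-1}) ----
   Weights/blocks are indexed 0..p-1 (the paper uses 1..p).              *)

Definition ntot (p : nat) (n : 'I_p -> nat) : nat := (\sum_(a < p) n a)%N.
Definition cum (p : nat) (n : 'I_p -> nat) (a : nat) : nat :=
  (\sum_(b < p | (b < a)%N) n b)%N.
Definition nblk (p : nat) (n : 'I_p -> nat) (a : nat) : nat := (cum n a.+1 - cum n a)%N.
Definition blk (p : nat) (n : 'I_p -> nat) (i : nat) : nat :=
  find (fun a => (i %% ntot n < cum n a.+1)%N) (iota 0 p).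
Definition kk (p : nat) (n : 'I_p -> nat) (i : nat) : nat :=
  ((i %/ ntot n) * nblk n (blk n i) + (i %% ntot n - cum n (blk n i)))%N.

Definition chi (R : ringType) (p : nat) (n : 'I_p -> nat) (a : nat) (x : R) (i : nat) : R :=
  if blk n i == a then x ^+ kk n i else 0.
Definition chiv (R : ringType) (p : nat) (n : 'I_p -> nat) (a : nat) (x : R) (l : nat)
  : 'cV[R]_l := \col_(i < l) chi n a x i.

Definition mplus (p : nat) (n : 'I_p -> nat) (m a : nat) : nat :=
  (m + find (fun d => blk n (m + d) == a) (iota 0 (ntot n)))%N.
(* m_{-a}: largest integer <= m with label a (meaningful when it exists) *)
Definition mminus (p : nat) (n : 'I_p -> nat) (m a : nat) : nat :=
  (m - find (fun d => blk n (m - d) == a) (iota 0 m.+1))%N.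

Definition gmom (R : realType) (mu : {measure set R -> \bar R}) (D : set R)
  (p1 p2 : nat) (n1 : 'I_p1 -> nat) (n2 : 'I_p2 -> nat)
  (w1 w2 : nat -> R -> R) (i j : nat) : R :=
  Rintegral mu D (fun x => x ^+ (kk n1 i + kk n2 j)%N * w1 (blk n1 i) x * w2 (blk n2 j) x).

Definition trunc (R : ringType) (g : nat -> nat -> R) (l : nat) : 'M[R]_l :=
  \matrix_(i < l, j < l) g i j.

Definition Apol (R : ringType) (S : nat -> nat -> R) (p1 : nat) (n1 : 'I_p1 -> nat)
  (a k : nat) (y : R) : R := \sum_(j < k.+1) S k j * chi n1 a y j.
(* Abar^{(k)}_b(x) = k-th entry of (Sbar^{-1})^T chi_{2,b}(x); as Sbar is upper
   triangular, the column k of Sbar^{-1} is the last column of (Sbar^{[k+1]})^{-1} *)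
Definition Abarpol (R : fieldType) (Sbar : nat -> nat -> R) (p2 : nat) (n2 : 'I_p2 -> nat)
  (b k : nat) (x : R) : R :=
  \sum_(j < k.+1) (invmx (trunc Sbar k.+1)) j ord_max * chi n2 b x j.

Definition Qform (R : ringType) S p1 (n1 : 'I_p1 -> nat) (w1 : nat -> R -> R) (k : nat) (y : R) : R :=
  \sum_(a < p1) Apol S n1 a k y * w1 a y.
Definition Qbarform (R : fieldType) Sbar p2 (n2 : 'I_p2 -> nat) (w2 : nat -> R -> R) (k : nat) (x : R) : R :=
  \sum_(b < p2) Abarpol Sbar n2 b k x * w2 b x.

Definition Kab (R : fieldType) S Sbar p1 p2 (n1 : 'I_p1 -> nat) (n2 : 'I_p2 -> nat)
  (b' a' l : nat) (x y : R) : R :=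
  \sum_(k < l) Abarpol Sbar n2 b' k x * Apol S n1 a' k y.
Definition Kfull (R : fieldType) S Sbar p1 p2 (n1 : 'I_p1 -> nat) (n2 : 'I_p2 -> nat)
  (w1 w2 : nat -> R -> R) (l : nat) (x y : R) : R :=
  \sum_(k < l) Qform S n1 w1 k y * Qbarform Sbar n2 w2 k x.

Definition Aplus (R : fieldType) (g : nat -> nat -> R) p1 (n1 : 'I_p1 -> nat)
  (a a' l : nat) (y : R) : R :=
  chi n1 a' y (mplus n1 l a)
  - ((\row_(j < l) g (mplus n1 l a) j) *m invmx (trunc g l) *m chiv n1 a' y l) 0 0.
Definition Abarminus (R : fieldType) (g : nat -> nat -> R) p1 p2
  (n1 : 'I_p1 -> nat) (n2 : 'I_p2 -> nat) (a b' m : nat) (x : R) : R :=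
  ((chiv n2 b' x m.+1)^T *m invmx (trunc g m.+1)
     *m (\col_(i < m.+1) (i == mminus n1 m a :> nat)%:R)) 0 0.
Definition Aminus (R : fieldType) (g : nat -> nat -> R) p1 p2
  (n1 : 'I_p1 -> nat) (n2 : 'I_p2 -> nat) (b a' m : nat) (y : R) : R :=
  ((\row_(i < m.+1) (i == mminus n2 m b :> nat)%:R) *m invmx (trunc g m.+1)
     *m chiv n1 a' y m.+1) 0 0.
Definition Abarplus (R : fieldType) (g : nat -> nat -> R) p2 (n2 : 'I_p2 -> nat)
  (b b' l : nat) (x : R) : R :=
  chi n2 b' x (mplus n2 l b)
  - ((chiv n2 b' x l)^T *m invmx (trunc g l) *m (\col_(i < l) g i (mplus n2 l b))) 0 0.

Definition Qplus (R : fieldType) g p1 (n1 : 'I_p1 -> nat) (w1 : nat -> R -> R) (a m : nat) (y : R) : R :=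
  \sum_(a' < p1) Aplus g n1 a a' m y * w1 a' y.
Definition Qbarminus (R : fieldType) g p1 p2 (n1 : 'I_p1 -> nat) (n2 : 'I_p2 -> nat)
  (w2 : nat -> R -> R) (a m : nat) (x : R) : R :=
  \sum_(b' < p2) Abarminus g n1 n2 a b' m x * w2 b' x.
Definition Qminus (R : fieldType) g p1 p2 (n1 : 'I_p1 -> nat) (n2 : 'I_p2 -> nat)
  (w1 : nat -> R -> R) (b m : nat) (y : R) : R :=
  \sum_(a' < p1) Aminus g n1 n2 b a' m y * w1 a' y.
Definition Qbarplus (R : fieldType) g p2 (n2 : 'I_p2 -> nat) (w2 : nat -> R -> R) (b m : nat) (x : R) : R :=
  \sum_(b' < p2) Abarplus g n2 b b' m x * w2 b' x.

(* Main.v *)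
Require Import Defs.
From HB Require Import structures.
From mathcomp Require Import all_boot all_order all_algebra.
From mathcomp Require Import all_classical all_reals all_analysis.
From mathcomp Require Import zify.
From mathcomp.algebra_tactics Require Import ring.
Import Order.TTheory GRing.Theory Num.Theory.
Import numFieldNormedType.Exports.
Local Open Scope classical_set_scope.
Local Open Scope ring_scope.

Module Comb.
Set Implicit Arguments. Unset Strict Implicit.
Local Open Scope nat_scope.
Lemma dm_eq (q : nat) {d r : nat} : (r < d)%N -> (q * d + r) %/ d = q /\ (q * d + r) %% d = r.
Proof.
move=> h; have d0 : (0 < d)%N by lia.
by rewrite divnMDl // modnMDl divn_small // modn_small // addn0.
Qed.

Lemma find_iota_eq (P : pred nat) (m n i : nat) : (i < n)%N -> P (m + i)%N ->
  (forall j, (j < i)%N -> ~~ P (m + j)%N) -> find P (iota m n) = i.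
Proof.
elim: n m i => [|n IH] m i //= hi hP hb.
case: i hi hP hb => [|i] hi hP hb; first by rewrite addn0 in hP; rewrite hP.
have -> : P m = false by apply/negbTE; move: (hb 0%N isT); rewrite addn0.
congr S; apply: IH => //; first by rewrite addSnnS.
by move=> j hj; rewrite addSnnS; apply: hb.
Qed.

Lemma find_iota_props (P : pred nat) (m n : nat) :
  (exists j, (j < n)%N /\ P (m + j)%N) ->
  [/\ (find P (iota m n) < n)%N, P (m + find P (iota m n))%N &
    forall j, (j < find P (iota m n))%N -> ~~ P (m + j)%N].
Proof.
move=> [j [hj hP]].
have hh : has P (iota m n) by apply/hasP; exists (m + j)%N => //; rewrite mem_iota; lia.
have hs := hh; rewrite has_find size_iota in hs.
split => //.
  by move: (nth_find 0%N hh); rewrite nth_iota.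
move=> k hk; move: (before_find 0%N hk); rewrite nth_iota //; last lia.
by move=> ->.
Qed.

Section Comb.
Variables (p : nat) (n : 'I_p -> nat).
Hypothesis hp : (0 < p)%N.
Hypothesis hn : forall a, (0 < n a)%N.
Local Notation N := (ntot n).
Local Notation cum := (cum n).

Lemma cumS {a} (ha : (a < p)%N) : cum a.+1 = (cum a + n (Ordinal ha))%N.
Proof.
rewrite /Defs.cum (bigD1 (Ordinal ha)) //= addnC; congr addn.
by apply: eq_bigl => b /=; rewrite ltnS -val_eqE /= ltn_neqAle andbC.
Qed.

Lemma cum_mono {a a'} : (a <= a')%N -> (cum a <= cum a')%N.
Proof.
move=> h; rewrite /Defs.cum big_mkcond [X in (_ <= X)%N]big_mkcond /=.
apply: leq_sum => b _; case: ifP => hb; last by [].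
by rewrite (leq_trans hb h).
Qed.

Lemma cum_ge {a} : (p <= a)%N -> cum a = N.
Proof.
move=> h; rewrite /Defs.cum /ntot; apply: eq_bigl => b.
by rewrite (leq_trans (ltn_ord b) h).
Qed.

Lemma cum0 : cum 0 = 0%N.
Proof. by rewrite /Defs.cum big_pred0. Qed.

Lemma N_gt0 : (0 < N)%N.
Proof.
rewrite -(cum_ge (leqnn p)); apply: (@leq_trans (cum 1)).
  by rewrite (cumS hp) cum0 add0n.
exact: cum_mono.
Qed.

Lemma nblkE {a} (ha : (a < p)%N) : nblk n a = n (Ordinal ha).
Proof. by rewrite /nblk cumS addKn. Qed.

Lemma nblk_gt0 {a} : (a < p)%N -> (0 < nblk n a)%N.
Proof. by move=> ha; rewrite (nblkE ha). Qed.

Lemma cum_lt {a} : (a < p)%N -> (cum a < cum a.+1)%N.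
Proof. by move=> ha; rewrite (cumS ha); have := hn (Ordinal ha); lia. Qed.

Lemma blk_char a r : (a < p)%N -> (cum a <= r < cum a.+1)%N ->
  find (fun a => (r < cum a.+1)%N) (iota 0 p) = a.
Proof.
move=> ha /andP[h1 h2]; apply: find_iota_eq => //.
move=> j hj; rewrite add0n -leqNgt; apply: leq_trans h1; exact: cum_mono.
Qed.

Lemma blk_props i : [/\ (blk n i < p)%N, (cum (blk n i) <= i %% N)%N
  & (i %% N < cum (blk n i).+1)%N].
Proof.
have := @find_iota_props (fun a => (i %% N < cum a.+1)%N) 0 p.
case.
  exists p.-1; split; first lia.
  by rewrite add0n prednK // cum_ge // ltn_mod N_gt0.
rewrite !add0n /blk => h1 h2 h3; split => //.
move: h3; case: (find _ _) => [|f] h3; first by rewrite cum0.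
by move: (h3 f (ltnSn f)); rewrite -leqNgt.
Qed.

Lemma blk_lt i : (blk n i < p)%N.
Proof. by case: (blk_props i). Qed.

Definition idx (a k : nat) : nat :=
  (k %/ nblk n a * N + cum a + k %% nblk n a)%N.

Lemma idx_props {a} k : (a < p)%N ->
  idx a k %/ N = k %/ nblk n a /\ idx a k %% N = (cum a + k %% nblk n a)%N.
Proof.
move=> ha; rewrite /idx -addnA; apply: dm_eq.
have := ltn_mod k (nblk n a); rewrite nblk_gt0 // => h.
have : (cum a.+1 <= N)%N by rewrite -(cum_ge (leqnn p)); apply: cum_mono.
rewrite /nblk in h *; have := cum_mono (leqnSn a); lia.
Qed.

Lemma blk_idx {a} k : (a < p)%N -> blk n (idx a k) = a.
Proof.
move=> ha; rewrite /blk; case: (idx_props k ha) => _ ->.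
apply: blk_char => //; have := ltn_mod k (nblk n a); rewrite nblk_gt0 // /nblk.
have := cum_mono (leqnSn a); lia.
Qed.

Lemma kk_idx a k : (a < p)%N -> kk n (idx a k) = k.
Proof.
move=> ha; rewrite /kk blk_idx //; case: (idx_props k ha) => -> ->.
by rewrite addKn -divn_eq.
Qed.

Lemma idx_blk i : idx (blk n i) (kk n i) = i.
Proof.
case: (blk_props i) => h1 h2 h3.
have hb := nblk_gt0 h1.
have hd : (i %% N - cum (blk n i) < nblk n (blk n i))%N by rewrite /nblk; lia.
rewrite /idx /kk; case: (dm_eq (i %/ N) hd) => -> ->.
rewrite -addnA subnKC //; exact: esym (divn_eq i N).
Qed.

Lemma idxS a k : (a < p)%N -> idx a k.+1 =
  if ((k %% nblk n a).+1 < nblk n a)%N then (idx a k).+1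
  else ((k %/ nblk n a).+1 * N + cum a)%N.
Proof.
move=> ha; have hb := nblk_gt0 ha; set d := nblk n a.
have hr := ltn_mod k d; rewrite hb in hr.
have e : k.+1 = (k %/ d * d + (k %% d).+1)%N by rewrite addnS -divn_eq.
rewrite /idx e; case: ifP => h.
  by case: (dm_eq (k %/ d) h) => -> ->; rewrite addnS.
have -> : (k %/ d * d + (k %% d).+1 = (k %/ d).+1 * d + 0)%N.
  by move/negbT: h; rewrite -leqNgt => h; rewrite mulSn; lia.
by case: (dm_eq (k %/ d).+1 hb) => -> ->; rewrite addn0.
Qed.

Lemma idx_ltS {a} k : (a < p)%N -> (idx a k < idx a k.+1 <= idx a k + N)%N.
Proof.
move=> ha; rewrite idxS //; case: ifP => h; first by rewrite ltnSn /=; have := N_gt0; lia.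
have hb := nblk_gt0 ha.
have hr := ltn_mod k (nblk n a).
have : (nblk n a <= N)%N.
  rewrite /nblk; have : (cum a.+1 <= N)%N by rewrite -(cum_ge (leqnn p)); apply: cum_mono.
  lia.
rewrite /idx; nia.
Qed.

Lemma idx_mono {a k k'} : (a < p)%N -> (k < k')%N -> (idx a k < idx a k')%N.
Proof.
move=> ha; apply: (@homo_ltn nat (idx a) (fun x y => x < y)%N).
  by move=> y x z; apply: ltn_trans.
by move=> i; case/andP: (idx_ltS i ha).
Qed.

Lemma same_lt m j : blk n m = blk n j -> (m < j)%N = (kk n m < kk n j)%N.
Proof.
move=> e; rewrite -{1}(idx_blk m) -{1}(idx_blk j) e.
apply/idP/idP => h; last exact: idx_mono (blk_lt j) h.
rewrite ltnNge; apply/negP => h'; move: h'; rewrite leq_eqVlt => /orP[/eqP h'|h'].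
  by move: h; rewrite h' ltnn.
by move: (idx_mono (blk_lt j) h') => /(ltn_trans h); rewrite ltnn.
Qed.

Definition sc (i : nat) : nat := idx (blk n i) (kk n i).+1.

Lemma blk_sc i : blk n (sc i) = blk n i.
Proof. by rewrite /sc blk_idx // blk_lt. Qed.

Lemma kk_sc i : kk n (sc i) = (kk n i).+1.
Proof. by rewrite /sc kk_idx // blk_lt. Qed.

Lemma sc_bounds i : (i < sc i <= i + N)%N.
Proof. by have := idx_ltS (kk n i) (blk_lt i); rewrite idx_blk. Qed.

Lemma chi_sc (R : nzRingType) a (x : R) i : chi n a x (sc i) = (x * chi n a x i)%R.
Proof. by rewrite /chi blk_sc kk_sc; case: ifP; rewrite ?mulr0 // exprS. Qed.

Variable L : nat.
Hypothesis hL : (N <= L.+1)%N.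

Lemma mm_props {b} : (b < p)%N ->
  [/\ (mminus n L b <= L)%N, blk n (mminus n L b) = b &
    forall m, (mminus n L b < m <= L)%N -> blk n m != b].
Proof.
move=> hb.
have hc : blk n (cum b) = b.
  have := blk_idx 0 hb; rewrite /idx div0n mod0n mul0n add0n addn0 //.
have hcl : (cum b < N)%N.
  apply: (leq_trans (cum_lt hb)); rewrite -(cum_ge (leqnn p)); exact: cum_mono.
have := @find_iota_props (fun d => blk n (L - d) == b) 0 L.+1.
case.
  by exists (L - cum b)%N; split; [lia| rewrite add0n /= subKn ?hc //; lia].
rewrite !add0n /mminus => h1 /eqP h2 h3; split => //; first lia.
move=> m /andP[m1 m2]; have := h3 (L - m)%N; rewrite subKn //; apply; lia.
Qed.

Lemma uniq_bd j j' : (j <= L)%N -> (j' <= L)%N -> blk n j = blk n j' ->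
  (L < sc j)%N -> (L < sc j')%N -> j = j'.
Proof.
wlog h : j j' / (j <= j')%N.
  move=> W h1 h2 e s1 s2; case: (leqP j j') => hh; first exact: W.
  by apply/esym/W => //; rewrite ?(ltnW hh) // e.
move=> h1 h2 e s1 s2; move: h; rewrite leq_eqVlt => /orP[/eqP //|h].
have hk : (kk n j < kk n j')%N by rewrite -same_lt.
have : (sc j <= j')%N.
  rewrite leqNgt same_lt ?blk_sc // kk_sc; lia.
lia.
Qed.

Lemma mm_sc {b} : (b < p)%N -> (L < sc (mminus n L b))%N.
Proof.
move=> hb; case: (mm_props hb) => h1 h2 h3.
rewrite ltnNge; apply/negP => h; move: (h3 (sc (mminus n L b))).
rewrite blk_sc h2 eqxx h; case/andP: (sc_bounds (mminus n L b)) => -> _.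
by move=> /(_ isT).
Qed.

Lemma mm_iff j b : (j <= L)%N -> (b < p)%N ->
  (j == mminus n L b) = (L < sc j)%N && (blk n j == b).
Proof.
move=> hj hb; case: (mm_props hb) => h1 h2 h3.
apply/eqP/andP => [->|[s /eqP e]]; first by split; [exact: mm_sc|rewrite h2].
apply: uniq_bd => //; first by rewrite e h2.
exact: mm_sc.
Qed.

Lemma mplus_sc j : (j <= L)%N -> (L < sc j)%N -> mplus n L.+1 (blk n j) = sc j.
Proof.
move=> hj hs; rewrite /mplus (@find_iota_eq _ 0 _ (sc j - L.+1)%N).
- lia.
- case/andP: (sc_bounds j); lia.
- by rewrite add0n subnKC // blk_sc.
move=> d hd; rewrite add0n; apply/negP => /eqP e.
have : (kk n (L.+1 + d) < kk n (sc j))%N by rewrite -same_lt ?blk_sc //; lia.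
rewrite kk_sc ltnS => hk.
have : ~~ (j < L.+1 + d)%N by rewrite same_lt // -leqNgt.
lia.
Qed.

End Comb.

End Comb.
Import Comb.

Lemma reidx (R : nzRingType) p (n : 'I_p -> nat) (hp : (0 < p)%N) (hn : forall a, (0 < n a)%N)
  L (hL : (ntot n <= L.+1)%N) (F : nat -> 'I_L.+1 -> R) :
  \sum_(b < p) \sum_(j < L.+1) ((j : nat) == mminus n L b)%:R * F b j =
  \sum_(j < L.+1) (if (L < sc n j)%N then F (blk n j) j else 0).
Proof.
rewrite exchange_big /=; apply: eq_bigr => j _.
have hj : (j <= L)%N by rewrite -ltnS.
case: ifP => hs.
  rewrite (bigD1 (Ordinal (blk_lt hp hn j))) //= (mm_iff hp hn hL hj (blk_lt hp hn j)) hs eqxx /= mul1r big1 ?addr0 //.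
  move=> b hb; rewrite (mm_iff hp hn hL hj (ltn_ord b)) hs /=; case: eqP => [e|]; last by rewrite mul0r.
  by move: hb; rewrite -val_eqE /= e eqxx.
by apply: big1 => b _; rewrite (mm_iff hp hn hL hj (ltn_ord b)) hs /= mul0r.
Qed.

Lemma core (R : fieldType) p1 p2 (n1 : 'I_p1 -> nat) (n2 : 'I_p2 -> nat)
  (hp1 : (0 < p1)%N) (hp2 : (0 < p2)%N)
  (hn1 : forall a, (0 < n1 a)%N) (hn2 : forall b, (0 < n2 b)%N)
  (g : nat -> nat -> R) L (hL1 : (ntot n1 <= L.+1)%N) (hL2 : (ntot n2 <= L.+1)%N)
  (hG : trunc g L.+1 \in unitmx)
  (hsh : forall i j, g (sc n1 i) j = g i (sc n2 j)) a' b' (x y : R) :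
  (x - y) * ((chiv n2 b' x L.+1)^T *m invmx (trunc g L.+1) *m chiv n1 a' y L.+1) 0 0 =
  \sum_(b < p2) Abarplus g n2 b b' L.+1 x * Aminus g n1 n2 b a' L y
  - \sum_(a < p1) Abarminus g n1 n2 a b' L x * Aplus g n1 a a' L.+1 y.
Proof.
set Gi := invmx (trunc g L.+1).
set zz := (chiv n2 b' x L.+1)^T *m Gi.
set ww := Gi *m chiv n1 a' y L.+1.
have hz : forall j : 'I_L.+1, \sum_(i < L.+1) zz 0 i * g i j = chi n2 b' x j.
  move=> j; have : zz *m trunc g L.+1 = (chiv n2 b' x L.+1)^T.
    by rewrite /zz -mulmxA mulVmx // mulmx1.
  move/matrixP=> /(_ 0 j); rewrite !mxE => <-; apply: eq_bigr => i _.
  by rewrite /trunc [X in _ = _ * X]mxE.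
have hw : forall i : 'I_L.+1, \sum_(j < L.+1) g i j * ww j 0 = chi n1 a' y i.
  move=> i; have : trunc g L.+1 *m ww = chiv n1 a' y L.+1.
    by rewrite /ww mulmxA mulmxV // mul1mx.
  move/matrixP=> /(_ i 0); rewrite !mxE => <-; apply: eq_bigr => j _.
  by rewrite /trunc [X in _ = X * _]mxE.
set K := (zz *m chiv n1 a' y L.+1) 0 0.
have hK1 : K = \sum_(j < L.+1) chi n2 b' x j * ww j 0.
  rewrite /K /zz -mulmxA mxE; apply: eq_bigr => j _; rewrite !mxE; by [].
have hK2 : K = \sum_(i < L.+1) zz 0 i * chi n1 a' y i.
  rewrite /K mxE; apply: eq_bigr => i _; rewrite [X in _ * X]mxE; by [].
have hAm : forall b, Aminus g n1 n2 b a' L y =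
    \sum_(j < L.+1) ((j : nat) == mminus n2 L b)%:R * ww j 0.
  move=> b; rewrite /Aminus -mulmxA mxE; apply: eq_bigr => j _; rewrite mxE; by [].
have hAbm : forall a, Abarminus g n1 n2 a b' L x =
    \sum_(i < L.+1) zz 0 i * ((i : nat) == mminus n1 L a)%:R.
  move=> a; rewrite /Abarminus mxE; apply: eq_bigr => i _; rewrite [X in _ * X]mxE; by [].
have hAp : forall a, Aplus g n1 a a' L.+1 y = chi n1 a' y (mplus n1 L.+1 a)
    - \sum_(j < L.+1) g (mplus n1 L.+1 a) j * ww j 0.
  move=> a; rewrite /Aplus -mulmxA mxE; congr (_ - _); apply: eq_bigr => j _.
  rewrite [X in X * _]mxE; by [].
have hAbp : forall b, Abarplus g n2 b b' L.+1 x = chi n2 b' x (mplus n2 L.+1 b)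
    - \sum_(i < L.+1) zz 0 i * g i (mplus n2 L.+1 b).
  move=> b; rewrite /Abarplus mxE; congr (_ - _); apply: eq_bigr => i _.
  rewrite [X in _ * X]mxE; by [].
pose T2 (j : 'I_L.+1) := \sum_(i < L.+1) zz 0 i * g i (sc n2 j).
pose E2 (j : 'I_L.+1) := if (L < sc n2 j)%N then chi n2 b' x (sc n2 j) - T2 j else 0.
pose T1 (i : 'I_L.+1) := \sum_(j < L.+1) g (sc n1 i) j * ww j 0.
pose E1 (i : 'I_L.+1) := if (L < sc n1 i)%N then chi n1 a' y (sc n1 i) - T1 i else 0.
have e2 : forall j : 'I_L.+1, chi n2 b' x (sc n2 j) = T2 j + E2 j.
  move=> j; rewrite /E2; case: ifP => h; first by rewrite addrC subrK.
  rewrite addr0; have hj : (sc n2 j < L.+1)%N by rewrite ltnS leqNgt h.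
  by rewrite -(hz (Ordinal hj)).
have e1 : forall i : 'I_L.+1, chi n1 a' y (sc n1 i) = T1 i + E1 i.
  move=> i; rewrite /E1; case: ifP => h; first by rewrite addrC subrK.
  rewrite addr0; have hi : (sc n1 i < L.+1)%N by rewrite ltnS leqNgt h.
  by rewrite -(hw (Ordinal hi)).
have LX : x * K = \sum_j T2 j * ww j 0 + \sum_j E2 j * ww j 0.
  rewrite hK1 mulr_sumr -big_split /=; apply: eq_bigr => j _.
  by rewrite mulrA -(chi_sc hp2 hn2) e2 mulrDl.
have LY : y * K = \sum_i zz 0 i * T1 i + \sum_i zz 0 i * E1 i.
  rewrite hK2 mulr_sumr -big_split /=; apply: eq_bigr => i _.
  by rewrite mulrCA -(chi_sc hp1 hn1) e1 mulrDr.
have hA : \sum_j T2 j * ww j 0 = \sum_i zz 0 i * T1 i.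
  rewrite /T2 /T1; under eq_bigr do rewrite mulr_suml.
  rewrite exchange_big /=; apply: eq_bigr => i _; rewrite mulr_sumr.
  by apply: eq_bigr => j _; rewrite hsh mulrA.
have hB : \sum_j E2 j * ww j 0 = \sum_(b < p2) Abarplus g n2 b b' L.+1 x * Aminus g n1 n2 b a' L y.
  under [RHS]eq_bigr do rewrite hAm mulr_sumr.
  under [RHS]eq_bigr do under eq_bigr do rewrite mulrCA.
  rewrite (@reidx R _ _ hp2 hn2 _ hL2 (fun b j => Abarplus g n2 b b' L.+1 x * ww j 0)).
  apply: eq_bigr => j _; rewrite /E2; case: ifP => h; last by rewrite mul0r.
  have hj : ((j : nat) <= L)%N by rewrite -ltnS.
  by rewrite hAbp (mplus_sc hp2 hn2 hL2 hj h).
have hC : \sum_i zz 0 i * E1 i = \sum_(a < p1) Abarminus g n1 n2 a b' L x * Aplus g n1 a a' L.+1 y.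
  under [RHS]eq_bigr do rewrite hAbm mulr_suml.
  under [RHS]eq_bigr do under eq_bigr do rewrite [_ * _%:R]mulrC -mulrA.
  rewrite (@reidx R _ _ hp1 hn1 _ hL1 (fun a i => zz 0 i * Aplus g n1 a a' L.+1 y)).
  apply: eq_bigr => i _; rewrite /E1; case: ifP => h; last by rewrite mulr0.
  have hi : ((i : nat) <= L)%N by rewrite -ltnS.
  by rewrite hAp (mplus_sc hp1 hn1 hL1 hi h).
by rewrite mulrBl LX LY hA hB hC opprD addrACA subrr add0r.
Qed.

Lemma widen_sum (R : nzRingType) n m (F : nat -> R) : (n <= m)%N ->
  (forall j, (n <= j)%N -> (j < m)%N -> F j = 0) ->
  \sum_(j < n) F j = \sum_(j < m) F j.
Proof.
move=> h hF; rewrite (big_ord_widen _ _ h) big_mkcond; apply: eq_bigr => j _.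
case: ifP => // hj; rewrite hF //; first by rewrite leqNgt hj.
Qed.

Lemma GB (R : fieldType) (S Sbar g : nat -> nat -> R)
  (hS1 : forall i, S i i = 1)
  (hS0 : forall i j, (i < j)%N -> S i j = 0)
  (hSbar0 : forall i j, (j < i)%N -> Sbar i j = 0)
  (hGB : forall i j, \sum_(k < i.+1) S i k * g k j = Sbar i j)
  (hG : forall l, trunc g l \in unitmx)
  p1 p2 (n1 : 'I_p1 -> nat) (n2 : 'I_p2 -> nat) b' a' l (x y : R) :
  Kab S Sbar n1 n2 b' a' l x y =
  ((chiv n2 b' x l)^T *m invmx (trunc g l) *m chiv n1 a' y l) 0 0.
Proof.
have hA : forall m, trunc S m *m trunc g m = trunc Sbar m.
  move=> m; apply/matrixP => i j; rewrite /trunc !mxE -hGB.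
  rewrite (@widen_sum _ i.+1 m (fun k => S i k * g k j)) //.
    by apply: eq_bigr => k _; rewrite !mxE.
  by move=> k hk _; rewrite hS0 ?mul0r.
have hSu : forall m, trunc S m \in unitmx.
  move=> m; rewrite unitmxE det_trig; last first.
    by apply/is_trig_mxP => i j hij; rewrite mxE hS0.
  by rewrite big1 ?unitr1 // => i _; rewrite mxE hS1.
have hSbu : forall m, trunc Sbar m \in unitmx.
  by move=> m; rewrite -hA unitmx_mul hSu hG.
pose Cm := \matrix_(j < l, k < l)
   (if (j <= k)%N then (invmx (trunc Sbar k.+1)) (inord j) ord_max else 0).
have hUC : trunc Sbar l *m Cm = 1%:M.
  apply/matrixP => i k; rewrite mxE [in RHS]mxE.
  have -> : \sum_(j < l) trunc Sbar l i j * Cm j k = \sum_(j < k.+1) Sbar i j *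
     (invmx (trunc Sbar k.+1)) (inord j) ord_max.
    pose G' j := Sbar i j *
     (if (j <= k)%N then (invmx (trunc Sbar k.+1)) (inord j) ord_max else 0).
    rewrite (eq_bigr (fun j : 'I_l => G' j)); last by move=> j _; rewrite !mxE.
    rewrite -(@widen_sum _ k.+1 l G') //; last by move=> j hj _; rewrite /G' leqNgt hj mulr0.
    by apply: eq_bigr => j _; rewrite /G' -ltnS ltn_ord.
  case: (leqP (i : nat) k) => hik.
    have := mulmxV (hSbu k.+1); move/matrixP => /(_ (inord i) ord_max).
    have e : ((inord i : 'I_k.+1) == ord_max) = (i == k).
      by rewrite -!val_eqE /= inordK // ltnS.
    rewrite !mxE -e => <-; apply: eq_bigr => j _; rewrite !mxE inord_val.
    by rewrite inordK // ltnS.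
  rewrite big1; last by move=> j _; rewrite hSbar0 ?mul0r //; apply: (leq_trans _ hik); rewrite ltnS -ltnS.
  by rewrite eq_sym; case: eqP => // e; move: hik; rewrite e ltnn.
have hCL : Cm *m trunc S l = invmx (trunc g l).
  have h1 : Cm *m trunc Sbar l = 1%:M by apply: mulmx1C.
  rewrite -[LHS]mulmx1 -(mulmxV (hG l)) mulmxA -(mulmxA Cm (trunc S l)) hA h1 mul1mx //.
rewrite /Kab -hCL mulmxA -[_ *m trunc S l *m _]mulmxA mxE.
apply: eq_bigr => k _; congr (_ * _).
  rewrite mxE /Abarpol.
  pose F' j := (if (j <= k)%N then (invmx (trunc Sbar k.+1)) (inord j) ord_max else 0)
      * chi n2 b' x j.
  rewrite (eq_bigr (fun j : 'I_l => F' j)); last by move=> j _; rewrite !mxE mulrC.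
  rewrite -(@widen_sum _ k.+1 l F') //; last by move=> j hj _; rewrite /F' leqNgt hj mul0r.
  by apply: eq_bigr => j _; rewrite /F' -ltnS ltn_ord inord_val.
rewrite mxE /Apol (@widen_sum _ k.+1 l (fun j => S k j * chi n1 a' y j)) //.
  by apply: eq_bigr => j _; rewrite !mxE.
by move=> j hj _; rewrite hS0 ?mul0r.
Qed.

Theorem theorem2p4 (R : realType) (mu : {finite_measure set R -> \bar R})
  (I : interval R) (p1 p2 : nat) (n1 : 'I_p1 -> nat) (n2 : 'I_p2 -> nat)
  (w1 w2 : nat -> R -> R)
  (hp1 : (0 < p1)%N) (hp2 : (0 < p2)%N)
  (hn1 : forall a, (0 < n1 a)%N) (hn2 : forall b, (0 < n2 b)%N)
  (hint : forall (k a b : nat), (a < p1)%N -> (b < p2)%N ->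
     mu.-integrable [set` I] (fun x => (x ^+ k * w1 a x * w2 b x)%:E))
  (hdet : forall l, \det (trunc (gmom mu [set` I] n1 n2 w1 w2) l) != 0)
  (S Sbar : nat -> nat -> R)
  (hS1 : forall i, S i i = 1)
  (hS0 : forall i j, (i < j)%N -> S i j = 0)
  (hSbar0 : forall i j, (j < i)%N -> Sbar i j = 0)
  (hGB : forall i j, \sum_(k < i.+1) S i k * gmom mu [set` I] n1 n2 w1 w2 k j = Sbar i j)
  (l : nat) (hl : (maxn (ntot n1) (ntot n2) <= l)%N) :
  (forall (a' b' : nat) (x y : R), (a' < p1)%N -> (b' < p2)%N ->
     (x - y) * Kab S Sbar n1 n2 b' a' l x y =
       \sum_(b < p2) Abarplus (gmom mu [set` I] n1 n2 w1 w2) n2 b b' l x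
                      * Aminus (gmom mu [set` I] n1 n2 w1 w2) n1 n2 b a' l.-1 y
     - \sum_(a < p1) Abarminus (gmom mu [set` I] n1 n2 w1 w2) n1 n2 a b' l.-1 x
                      * Aplus (gmom mu [set` I] n1 n2 w1 w2) n1 a a' l y)
  /\
  (forall x y : R,
     (x - y) * Kfull S Sbar n1 n2 w1 w2 l x y =
       \sum_(b < p2) Qbarplus (gmom mu [set` I] n1 n2 w1 w2) n2 w2 b l x
                      * Qminus (gmom mu [set` I] n1 n2 w1 w2) n1 n2 w1 b l.-1 y
     - \sum_(a < p1) Qbarminus (gmom mu [set` I] n1 n2 w1 w2) n1 n2 w2 a l.-1 x
                      * Qplus (gmom mu [set` I] n1 n2 w1 w2) n1 w1 a l y).
Proof.
set g := gmom mu [set` I] n1 n2 w1 w2.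
have hG : forall m, trunc g m \in unitmx by move=> m; rewrite unitmxE unitfE hdet.
have hsh : forall i j, g (sc n1 i) j = g i (sc n2 j).
  by move=> i j; rewrite /g /gmom (kk_sc hp1 hn1) (blk_sc hp1 hn1) (kk_sc hp2 hn2) (blk_sc hp2 hn2) addSn addnS.
have hl1 : (ntot n1 <= l)%N by apply: leq_trans hl; rewrite leq_maxl.
have hl2 : (ntot n2 <= l)%N by apply: leq_trans hl; rewrite leq_maxr.
case: l hl hl1 hl2 => [|L] hl hl1 hl2.
  by move: (N_gt0 hp1 hn1); rewrite leqn0 in hl1; rewrite (eqP hl1).
have P1 : forall (a' b' : nat) (x y : R),
     (x - y) * Kab S Sbar n1 n2 b' a' L.+1 x y =
       \sum_(b < p2) Abarplus g n2 b b' L.+1 x * Aminus g n1 n2 b a' L y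
     - \sum_(a < p1) Abarminus g n1 n2 a b' L x * Aplus g n1 a a' L.+1 y.
  move=> a' b' x y; rewrite (@GB R S Sbar g hS1 hS0 hSbar0 hGB hG).
  exact: (@core R _ _ n1 n2 hp1 hp2 hn1 hn2 g L hl1 hl2 (hG L.+1) hsh a' b' x y).
split; first by move=> a' b' x y _ _; exact: P1.
move=> x y /=.
transitivity (\sum_(a' < p1) \sum_(b' < p2) w1 a' y * w2 b' x *
   ((x - y) * Kab S Sbar n1 n2 b' a' L.+1 x y)).
  transitivity ((x - y) * \sum_(a' < p1) \sum_(b' < p2) w1 a' y * w2 b' x *
       Kab S Sbar n1 n2 b' a' L.+1 x y); last first.
    rewrite mulr_sumr; apply: eq_bigr => a' _; rewrite mulr_sumr.
    by apply: eq_bigr => b' _; ring.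
  congr (_ * _); rewrite /Kfull.
  under eq_bigr do rewrite /Qform /Qbarform mulr_suml.
  under eq_bigr do under eq_bigr do rewrite mulr_sumr.
  rewrite /Kab; under [RHS]eq_bigr do under eq_bigr do rewrite mulr_sumr.
  rewrite exchange_big /=; apply: eq_bigr => a' _.
  rewrite exchange_big /=; apply: eq_bigr => b' _.
  by apply: eq_bigr => k _; ring.
under [LHS]eq_bigr => a' _.
  under eq_bigr => b' _ do rewrite P1 mulrBr !mulr_sumr.
  over.
under [LHS]eq_bigr => a' _ do rewrite sumrB.
rewrite sumrB; congr (_ - _).
  rewrite /Qbarplus /Qminus.
  under [RHS]eq_bigr => b _ do rewrite mulr_suml.
  under [RHS]eq_bigr => b _ do under eq_bigr => b' _ do rewrite mulr_sumr.
  rewrite [RHS]exchange_big /=.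
  under [RHS]eq_bigr => b' _ do rewrite exchange_big /=.
  rewrite [RHS]exchange_big /=.
  apply: eq_bigr => a' _; apply: eq_bigr => b' _; apply: eq_bigr => b _; ring.
  rewrite /Qbarminus /Qplus.
  under [RHS]eq_bigr => b _ do rewrite mulr_suml.
  under [RHS]eq_bigr => b _ do under eq_bigr => b' _ do rewrite mulr_sumr.
  rewrite [RHS]exchange_big /=.
  under [RHS]eq_bigr => b' _ do rewrite exchange_big /=.
  rewrite [RHS]exchange_big /=.
  apply: eq_bigr => a' _; apply: eq_bigr => b' _; apply: eq_bigr => b _; ring.
Qed.
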